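(* Let $f\in K[z]$ be a polynomial of degree $d\ge2$ with $\mathrm{Crit}(f)\cap J(f)\neq\emptyset$. Then there exist a constant $M\ge1$ and $N\ge 1$ such that for every $c\in\mathrm{Crit}(f)\cap J(f)$ and every $n\ge N$, the iterate $f^n$ has at most $M$ critical values (in $K$) lying in the disk $D_n(c)$.
   Context: $K$ is an algebraically closed field of characteristic $0$, complete with respect to a nontrivial nonarchimedean absolute value $|\cdot|$; $D(x,r)=\{y\in K:|y-x|<r\}$. Set $p=\mathrm{res.char}(K)$ if positive and $p=e$ otherwise. $\mathsf{P}^1$ is the Berkovich projective line over $K$, $\mathsf{A}^1=\mathsf{P}^1\setminus\{\infty\}$; $\|g\|_\xi$ is the value at $g$ of the seminorm $\xi$; a point corresponding to a closed disk $\overline D(x,r)$ has $\|g\|_\xi=\sup_{\overline D(x,r)}|g|$ and $\mathrm{diam}(\xi)=r$. $\deg_\xi f$ is the local degree, $\kappa(f)=\min\{\log_p|\deg_\xi f|:\xi\in\mathsf{P}^1\}$. $\mathcal{K}(f)$ is the set of $\xi\in\mathsf{A}^1$ with $f^n(\xi)\not\to\infty$, $J(f)=\partial\mathcal{K}(f)$. $\mathrm{Crit}(f)\subset K$ is the set of zeros of $f'$; critical values of $f^n$ are images under $f^n$ of zeros of $(f^n)'$. The base point $\xi_f$ corresponds to the smallest closed disk in $K$ containing $\mathcal{K}(f)\cap K$, $R_f=\mathrm{diam}(\xi_f)$, $\Xi_f=p^{-\kappa(f)}\|f'\|_{\xi_f}$, and for $s>0$, $x\in K$: $D_s(x)=D(x,R_f\Xi_f^{-s})$.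 *)

(* Defs.v *)
From HB Require Import structures.
From mathcomp Require Import all_boot all_order all_algebra.
From mathcomp Require Import boolp classical_sets reals sequences exp.
Set Implicit Arguments. Unset Strict Implicit. Unset Printing Implicit Defensive.
Import Order.TTheory GRing.Theory Num.Theory.
Local Open Scope ring_scope.
Local Open Scope classical_set_scope.

Section Defs.
Variables (R : realType) (K : closedFieldType) (abs : K -> R).

Definition nonarch_abs : Prop :=
  [/\ forall x, 0 <= abs x,
      forall x, abs x = 0 <-> x = 0,
      forall x y, abs (x * y) = abs x * abs y &
      forall x y, abs (x + y) <= Num.max (abs x) (abs y)].

Definition nontrivial_abs : Prop := exists x, abs x != 0 /\ abs x != 1.

Definition complete_abs : Prop :=
  forall u : nat -> K,
    (forall e, 0 < e -> exists N, forall m n, (N <= m)%N -> (N <= n)%N ->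
        abs (u m - u n) < e) ->
    exists l, forall e, 0 < e -> exists N, forall n, (N <= n)%N -> abs (u n - l) < e.

(* residue characteristic: the prime q with |q| < 1 (q lies in the maximal
   ideal), or 0 if there is none *)
Definition res_char : nat := xget 0%N [set q | prime q /\ abs q%:R < 1].

Definition pbase : R := if (0 < res_char)%N then (res_char%:R : R) else expR 1.

Definition logp (x : R) : R := ln x / ln pbase.

Definition odisk (x : K) (r : R) : set K := [set y | abs (y - x) < r].

Definition fiter (f : {poly K}) (n : nat) : {poly K} := iter n (fun g => f \Po g) 'X.
Definition orbit (f : {poly K}) (n : nat) (x : K) : K := iter n (fun y => f.[y]) x.

Definition escapes (f : {poly K}) (x : K) : Prop :=
  forall B : R, exists N, forall n, (N <= n)%N -> B < abs (orbit f n x).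

Definition filled (f : {poly K}) : set K := [set x | ~ escapes f x].

(* J(f) ∩ K : type-I points of the boundary of K(f) in the Berkovich line *)
Definition julia (f : {poly K}) : set K :=
  [set x | filled f x /\ forall r, 0 < r -> exists y, abs (y - x) < r /\ escapes f y].

Definition crit (f : {poly K}) : set K := [set c | root f^`() c].

Definition critvals (f : {poly K}) (n : nat) : set K :=
  [set v | exists w, root (fiter f n)^`() w /\ v = (fiter f n).[w]].

(* R_f = diam(xi_f): diameter of the smallest closed disk containing K(f) ∩ K *)
Definition Rf (f : {poly K}) : R :=
  sup [set abs (x - y) | x in filled f & y in filled f].

(* the closed disk of xi_f (union of closed disks of radius R_f centred at
   points of K(f) ∩ K, which in the ultrametric setting is one disk) *)
Definition xi_disk (f : {poly K}) : set K :=
  [set y | exists2 x, filled f x & abs (y - x) <= Rf f].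

Definition norm_xi (f g : {poly K}) : R := sup [set abs g.[y] | y in xi_disk f].

Definition rootseq (q : {poly K}) : seq K := sval (closed_field_poly_normal q).

(* local degree of f at the point zeta(a,r) of A^1 (r >= 0; r = 0 is the
   type I point a): number of zeros of f - f(a), with multiplicity, in the
   closed disk of radius r around a *)
Definition local_deg (f : {poly K}) (a : K) (r : R) : nat :=
  count (fun z => abs (z - a) <= r) (rootseq (f - (f.[a])%:P)).

(* set of local degrees deg_xi f over xi in P^1 (the point infinity has local
   degree d = deg f) *)
Definition local_degs (f : {poly K}) : set nat :=
  [set m | m = (size f).-1 \/ exists a r, 0 <= r /\ m = local_deg f a r].

Definition kappa (f : {poly K}) : R :=
  inf [set logp (abs (m%:R)) | m in local_degs f].

Definition Xi (f : {poly K}) : R := powR pbase (- kappa f) * norm_xi f f^`().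

Definition Ds (f : {poly K}) (s : R) (x : K) : set K :=
  odisk x (Rf f * powR (Xi f) (- s)).

End Defs.

(* Main.v *)
Require Import Defs.
From HB Require Import structures.
From mathcomp Require Import all_boot all_order all_algebra.
From mathcomp Require Import boolp classical_sets reals sequences exp.
From mathcomp Require Import separable.
From mathcomp Require cyclic cyclotomic.
From mathcomp Require Import ring lra zify.
Import Order.TTheory GRing.Theory Num.Theory.
Local Open Scope ring_scope.
Local Open Scope classical_set_scope.

Set Implicit Arguments.
Unset Strict Implicit.

Section Abs.
Variables (R : realType) (K : closedFieldType) (abs : K -> R).
Hypothesis Habs : nonarch_abs abs.

Lemma abs_ge0 x : 0 <= abs x. Proof. by case: Habs. Qed.
Lemma abs_eq0 x : abs x = 0 <-> x = 0. Proof. by case: Habs. Qed.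
Lemma absM x y : abs (x * y) = abs x * abs y. Proof. by case: Habs. Qed.
Lemma abs_ultra x y : abs (x + y) <= Num.max (abs x) (abs y). Proof. by case: Habs. Qed.
Lemma abs0 : abs 0 = 0. Proof. by apply/abs_eq0. Qed.
Lemma abs1 : abs 1 = 1.
Proof.
have h := absM 1 1; rewrite mulr1 in h.
have h0 : abs 1 != 0 by apply/eqP => /abs_eq0 /eqP; rewrite oner_eq0.
by apply: (mulIf h0); rewrite mul1r -h.
Qed.
Lemma absN x : abs (- x) = abs x.
Proof.
have h : abs (-1) * abs (-1) = 1 by rewrite -absM mulrNN mulr1 abs1.
have hp := abs_ge0 (-1).
have e : abs (-1) = 1.
  have : (abs (-1) - 1) * (abs (-1) + 1) = 0 by rewrite mulrDr !mulrBl h; ring.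
  move/eqP; rewrite mulf_eq0 => /orP[]; first by rewrite subr_eq0 => /eqP.
  by move=> /eqP e; exfalso; move: e; lra.
by rewrite -mulN1r absM e mul1r.
Qed.
Lemma absB x y : abs (x - y) = abs (y - x).
Proof. by rewrite -absN opprB. Qed.
Lemma absX x n : abs (x ^+ n) = abs x ^+ n.
Proof. elim: n => [|n IH]; by rewrite ?expr0 ?abs1 // !exprS absM IH. Qed.
Lemma abs_le x y B : abs x <= B -> abs y <= B -> abs (x + y) <= B.
Proof. move=> hx hy; apply: le_trans (abs_ultra x y) _; by rewrite ge_max hx hy. Qed.
Lemma abs_lt x y B : abs x < B -> abs y < B -> abs (x + y) < B.
Proof. move=> hx hy; apply: le_lt_trans (abs_ultra x y) _; by rewrite gt_max hx hy. Qed.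
Lemma abs_sum_le (I : Type) (r : seq I) (P : pred I) (F : I -> K) B :
  0 <= B -> (forall i, P i -> abs (F i) <= B) -> abs (\sum_(i <- r | P i) F i) <= B.
Proof.
move=> hB hF; apply: (big_ind (fun x => abs x <= B)) => //.
- by rewrite abs0.
- by move=> ? ?; apply: abs_le.
Qed.
Lemma abs_sum_lt (I : Type) (r : seq I) (P : pred I) (F : I -> K) B :
  0 < B -> (forall i, P i -> abs (F i) < B) -> abs (\sum_(i <- r | P i) F i) < B.
Proof.
move=> hB hF; apply: (big_ind (fun x => abs x < B)) => //.
- by rewrite abs0.
- by move=> ? ?; apply: abs_lt.
Qed.
Lemma abs_strict x y : abs y < abs x -> abs (x + y) = abs x.
Proof.
move=> h; apply/eqP; rewrite eq_le; apply/andP; split.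
  by apply: le_trans (abs_ultra x y) _; rewrite ge_max lexx ltW.
rewrite leNgt; apply/negP => h2.
have : abs ((x + y) + - y) < abs x by apply: abs_lt; rewrite ?absN.
by rewrite addrK ltxx.
Qed.
Lemma abs_natr n : abs (n%:R) <= 1.
Proof.
elim: n => [|n IH]; first by rewrite abs0 ler01.
by rewrite -addn1 natrD; apply: abs_le; rewrite // abs1.
Qed.
Lemma abs_intr (z : int) : abs (z%:~R) <= 1.
Proof. case: z => n; by rewrite ?NegzE ?mulrNz ?absN abs_natr. Qed.
Lemma abs_inv x : abs (x^-1) = (abs x)^-1.
Proof.
have [->|x0] := eqVneq x 0; first by rewrite invr0 abs0 invr0.
have h : abs x * abs x^-1 = 1 by rewrite -absM divff // abs1.
have ax : abs x != 0 by apply/eqP => /abs_eq0 /eqP; rewrite (negPf x0).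
by rewrite -[abs x^-1]mul1r -[1 in LHS](mulVf ax) -mulrA h mulr1.
Qed.
Lemma abs_tri x y : abs (x + y) <= abs x + abs y.
Proof.
apply: le_trans (abs_ultra x y) _; rewrite ge_max.
by rewrite lerDl abs_ge0 lerDr abs_ge0.
Qed.
Lemma abs_shift x y : abs y <= Num.max (abs x) (abs (y - x)).
Proof. by rewrite -{1}(subrK x y) addrC abs_ultra. Qed.
Lemma abs_natr_pos n : [pchar K] =i pred0 -> (0 < n)%N -> 0 < abs (n%:R : K).
Proof.
move=> hc n0; rewrite lt_def abs_ge0 andbT; apply/eqP => /abs_eq0 /eqP.
by rewrite (pcharf0P _).1 // => /eqP n00; move: n0; rewrite n00.
Qed.
End Abs.

Lemma powle (R : realType) (x y : R) n : 0 <= x -> x <= y -> x ^+ n <= y ^+ n.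
Proof. move=> h0 h1; apply: lerXn2r => //; rewrite nnegrE //; exact: le_trans h1. Qed.

Lemma single_le_sum (R : realType) (n : nat) (F : 'I_n -> R) i :
  (forall j, 0 <= F j) -> F i <= \sum_j F j.
Proof.
move=> h; rewrite (bigD1 i) //= lerDl; exact: sumr_ge0.
Qed.

Lemma seq_le_sum (R : realType) (T : eqType) (r : seq T) (F : T -> R) x :
  x \in r -> (forall j, 0 <= F j) -> F x <= \sum_(j <- r) F j.
Proof.
move=> xr h; rewrite (big_rem x) //= lerDl; exact: sumr_ge0.
Qed.

Notation orb := Defs.orbit.

Section Poly.
Variables (R : realType) (K : closedFieldType) (abs : K -> R).
Hypothesis Habs : nonarch_abs abs.

Definition Sb (p : {poly K}) (T : R) := \sum_(i < size p) abs p`_i * T ^+ i.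

Lemma Sb_ge0 p T : 0 <= T -> 0 <= Sb p T.
Proof. move=> hT; apply: sumr_ge0 => i _; apply: mulr_ge0; [exact: abs_ge0|exact: exprn_ge0]. Qed.

Lemma horner_bound p x T : abs x <= T -> abs p.[x] <= Sb p T.
Proof.
move=> hx; have hT : 0 <= T by apply: le_trans hx; exact: abs_ge0.
rewrite horner_coef; apply: abs_sum_le => //; first exact: Sb_ge0.
move=> i _; rewrite absM // absX //.
have hF : forall j : 'I_(size p), 0 <= abs p`_j * T ^+ j.
  by move=> j; apply: mulr_ge0; [exact: abs_ge0|exact: exprn_ge0].
apply: le_trans (@single_le_sum _ _ (fun j : 'I_(size p) => abs p`_j * T ^+ j) i hF).
apply: ler_wpM2l; first exact: abs_ge0.
by apply: powle => //; exact: abs_ge0.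
Qed.

Lemma XX_bound x y T i : abs x <= T -> abs y <= T -> 1 <= T ->
  abs (x ^+ i - y ^+ i) <= abs (x - y) * T ^+ i.
Proof.
move=> hx hy hT; rewrite subrXX absM //; apply: ler_wpM2l; first exact: abs_ge0.
apply: abs_sum_le => //; first by apply: exprn_ge0; apply: le_trans hT.
move=> j _; rewrite absM // !absX //.
apply: le_trans (_ : T ^+ (i.-1 - j) * T ^+ j <= _).
  apply: ler_pM.
  - by apply: exprn_ge0; exact: abs_ge0.
  - by apply: exprn_ge0; exact: abs_ge0.
  - by apply: powle => //; exact: abs_ge0.
  - by apply: powle => //; exact: abs_ge0.
rewrite -exprD; apply: ler_weXn2l => //.
case: j => j /= hj; case: i hj => // i hj /=.
by rewrite subnK // -ltnS.
Qed.

Lemma lipschitz p x y T : abs x <= T -> abs y <= T -> 1 <= T ->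
  abs (p.[x] - p.[y]) <= abs (x - y) * Sb p T.
Proof.
move=> hx hy hT; rewrite !horner_coef -sumrB.
apply: abs_sum_le => //.
  by apply: mulr_ge0; [exact: abs_ge0| apply: Sb_ge0; apply: le_trans hT].
move=> i _; rewrite -mulrBr absM //.
apply: le_trans (_ : abs p`_i * (abs (x - y) * T ^+ i) <= _).
  by apply: ler_wpM2l; [exact: abs_ge0 | exact: XX_bound].
rewrite mulrCA; apply: ler_wpM2l; first exact: abs_ge0.
apply: (@single_le_sum _ _ (fun j : 'I_(size p) => abs p`_j * T ^+ j) i).
by move=> j; apply: mulr_ge0; [exact: abs_ge0|apply: exprn_ge0; apply: le_trans hT].
Qed.

Definition Q2 (p : {poly K}) (c : K) := (p - p.[c]%:P) %/ ('X - c%:P) ^+ 2.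

Lemma Q2_eq p c : root p^`() c -> p - p.[c]%:P = Q2 p c * ('X - c%:P) ^+ 2.
Proof.
move=> hc.
have r0 : root (p - p.[c]%:P) c by rewrite /root hornerD hornerN hornerC subrr.
have [q hq] := factor_theorem _ _ r0.
have rq : root q c.
  move: hc; rewrite /root.
  have -> : p^`() = (p - p.[c]%:P)^`() by rewrite derivB derivC subr0.
  rewrite hq derivM derivXsubC hornerD !hornerM hornerXsubC subrr mulr0 add0r.
  by rewrite hornerC mulr1.
have [q2 hq2] := factor_theorem _ _ rq.
have e : p - p.[c]%:P = q2 * ('X - c%:P) ^+ 2 by rewrite hq hq2 -mulrA expr2.
rewrite /Q2 e mulpK //; apply: expf_neq0; by rewrite polyXsubC_eq0.
Qed.

Lemma quad_bound p c x T : root p^`() c -> abs x <= T ->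
  abs (p.[x] - p.[c]) <= abs (x - c) ^+ 2 * Sb (Q2 p c) T.
Proof.
move=> hc hx.
have : (p - p.[c]%:P).[x] = (Q2 p c * ('X - c%:P) ^+ 2).[x] by rewrite -Q2_eq.
rewrite hornerD hornerN hornerC hornerM horner_exp hornerXsubC => ->.
rewrite absM // absX // mulrC; apply: ler_wpM2l.
  by apply: exprn_ge0; exact: abs_ge0.
exact: horner_bound.
Qed.

End Poly.

Section Orbits.
Variables (R : realType) (K : closedFieldType) (abs : K -> R).
Hypothesis Habs : nonarch_abs abs.
Variable f : {poly K}.
Hypothesis Hdeg : (2 < size f)%N.

Lemma orbS n x : orb f n.+1 x = f.[orb f n x]. Proof. by []. Qed.
Lemma orbD m n x : orb f (m + n) x = orb f m (orb f n x).
Proof. by rewrite /Defs.orbit iterD. Qed.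
Lemma orb1 x : orb f 1 x = f.[x]. Proof. by []. Qed.
Lemma orb0 x : orb f 0 x = x. Proof. by []. Qed.

Lemma filled_f x : filled abs f x -> filled abs f f.[x].
Proof.
move=> hx he; apply: hx => B; have [N hN] := he B; exists N.+1 => n hn.
case: n hn => // n hn; rewrite /Defs.orbit iterSr; exact: hN.
Qed.

Lemma filled_orb x k : filled abs f x -> filled abs f (orb f k x).
Proof. move=> hx; elim: k => // k IH; rewrite orbS; exact: filled_f. Qed.

Lemma fiter_horner n x : (fiter f n).[x] = orb f n x.
Proof.
elim: n => [|n IH]; first by rewrite /fiter /= hornerX.
by rewrite /fiter iterS -/(fiter f n) horner_comp IH.
Qed.

Lemma crit_iter n w : root (fiter f n)^`() w -> exists k, (k < n)%N /\ root f^`() (orb f k w).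
Proof.
elim: n => [|n IH]; first by rewrite /fiter /= derivX /root hornerC oner_eq0.
rewrite /fiter iterS -/(fiter f n) deriv_comp /root hornerM horner_comp fiter_horner mulf_eq0.
case/orP => [h|h]; first by exists n.
by have [k [hk1 hk2]] := IH h; exists k; split => //; apply: ltnW.
Qed.

Lemma critvals_char n v : critvals f n v ->
  exists c' j, root f^`() c' /\ (1 <= j <= n)%N /\ v = orb f j c'.
Proof.
case=> w [hw ->]; have [k [hk hr]] := @crit_iter n w hw.
exists (orb f k w), (n - k)%N; split => //; split.
  by rewrite subn_gt0 hk leq_subr.
by rewrite fiter_horner -orbD subnK // ltnW.
Qed.

Lemma inv_disk c eps m T : (0 < m)%N ->
  (forall u, abs (u - c) < eps -> abs (orb f m u - c) < eps) ->
  (forall u, abs (u - c) < eps -> abs u <= T) ->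
  forall u, abs (u - c) < eps -> ~ escapes abs f u.
Proof.
move=> m0 hinv hb u hu he.
have hk : forall k, abs (orb f (k * m) u - c) < eps.
  elim=> [|k IH]; first by rewrite mul0n.
  by rewrite mulSn orbD; apply: hinv.
have [N hN] := he T.
have := hN (N * m)%N (leq_pmulr _ m0).
by rewrite ltNge (hb _ (hk N)).
Qed.

Definition lc := abs (lead_coef f).
Definition T0 := 1 + 2 / lc + \sum_(i < size f) abs f`_i / lc.

Lemma lc_pos : 0 < lc.
Proof.
rewrite /lc lt_def abs_ge0 // andbT; apply/eqP => /(abs_eq0 Habs) /eqP.
rewrite lead_coef_eq0 => /eqP f0; move: Hdeg; by rewrite f0 size_poly0.
Qed.

Lemma T0_ge1 : 1 <= T0.
Proof.
rewrite /T0 -addrA lerDl; apply: addr_ge0.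
  by apply: divr_ge0 => //; apply: ltW; exact: lc_pos.
apply: sumr_ge0 => i _; apply: divr_ge0; [exact: abs_ge0|apply: ltW; exact: lc_pos].
Qed.

Lemma big_step x : T0 < abs x -> 2 * abs x <= abs f.[x].
Proof.
move=> hx.
have lcp := lc_pos.
have x1 : 1 < abs x by apply: le_lt_trans hx; exact: T0_ge1.
have xp : 0 < abs x by apply: lt_trans x1.
have sf : size f = (size f).-1.+1 by rewrite prednK //; apply: leq_trans Hdeg.
set d := (size f).-1 in sf.
have d2 : (2 <= d)%N by rewrite -ltnS -sf.
have hsum : \sum_(i < size f) abs f`_i / lc <= T0 - 1 - 2 / lc.
  by rewrite /T0; lra.
have h2 : 2 / lc < abs x.
  apply: le_lt_trans hx.
  have : 0 <= \sum_(i < size f) abs f`_i / lc.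
    apply: sumr_ge0 => i _; apply: divr_ge0; [exact: abs_ge0|exact: ltW].
  rewrite /T0; lra.
have hlead : abs (lead_coef f * x ^+ d) = lc * abs x ^+ d by rewrite absM // absX.
have hterm : forall i : 'I_d, abs (f`_i * x ^+ i) < lc * abs x ^+ d.
  move=> i; rewrite absM // absX //.
  have hi : abs f`_i / lc < abs x.
    apply: le_lt_trans hx; apply: le_trans (_ : \sum_(i < size f) abs f`_i / lc <= _).
      have ilt : (i < size f)%N by rewrite sf ltnS ltnW.
      have := @single_le_sum _ _ (fun j : 'I_(size f) => abs f`_j / lc) (Ordinal ilt).
      apply=> j; apply: divr_ge0; [exact: abs_ge0|exact: ltW].
    have : 0 <= 2 / lc by apply: divr_ge0 => //; exact: ltW.
    lra.
  have hi' : abs f`_i < lc * abs x by rewrite -ltr_pdivrMl // mulrC.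
  apply: lt_le_trans (_ : lc * abs x * abs x ^+ i <= _).
    by rewrite ltr_pM2r //; apply: exprn_gt0.
  rewrite -mulrA -exprS; apply: ler_wpM2l; first exact: ltW.
  by apply: ler_weXn2l; [exact: ltW|].
rewrite horner_coef sf big_ord_recr /= addrC -lead_coefE -/d.
have hs : abs (\sum_(i < d) f`_(widen_ord (leqnSn d) i) * x ^+ i) < abs (lead_coef f * x ^+ d).
  rewrite hlead; apply: abs_sum_lt => //.
    by apply: mulr_gt0 => //; exact: exprn_gt0.
  move=> i _; exact: (hterm i).
rewrite (abs_strict Habs hs) hlead.
have e2 : 2 <= lc * abs x by rewrite -ler_pdivrMl // ltW // mulrC.
apply: le_trans (_ : lc * abs x * abs x <= _).
  by rewrite ler_pM2r.
rewrite -mulrA -expr2; apply: ler_wpM2l; first exact: ltW.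
by apply: ler_weXn2l => //; exact: ltW.
Qed.

Lemma orbit_grow x : T0 < abs x -> forall n, n.+1%:R * abs x <= abs (orb f n x).
Proof.
move=> hx; elim=> [|n IH]; first by rewrite mul1r.
have hy : T0 < abs (orb f n x).
  apply: lt_le_trans IH; apply: (lt_le_trans hx).
  have h1 := T0_ge1; have h0 : 0 <= abs x by apply: le_trans (ltW hx); lra.
  by rewrite ler_peMl ?ler1n.
rewrite orbS; apply: le_trans (big_step hy).
rewrite -[n.+2]addn1 natrD mulrDl mul1r.
have x0 : 0 <= abs x by exact: abs_ge0.
have : abs x <= abs (orb f n x).
  by apply: le_trans IH; rewrite ler_peMl ?ler1n.
lra.
Qed.

Lemma big_escapes x : T0 < abs x -> escapes abs f x.
Proof.
move=> hx B.
have xp : 0 < abs x by have := T0_ge1; lra.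
have h0 : 0 <= `|B| / abs x by apply: divr_ge0 => //; apply: ltW.
have hb := archi_boundP h0.
set N := Num.Def.archi_bound _ in hb.
exists N => n hn; apply: lt_le_trans (orbit_grow hx n).
have : `|B| / abs x < n.+1%:R.
  apply: (lt_le_trans hb); rewrite ler_nat; apply: leq_trans hn _; exact: leqnSn.
rewrite ltr_pdivrMr // => h.
apply: le_lt_trans h; exact: ler_norm.
Qed.

Lemma filled_le x : filled abs f x -> abs x <= T0.
Proof. move=> hx; rewrite leNgt; apply/negP => h; apply: hx; exact: big_escapes. Qed.

End Orbits.

Section Fourier.
Variables (R : realType) (K : closedFieldType) (abs : K -> R).
Hypothesis Habs : nonarch_abs abs.
Hypothesis Hchar : [pchar K] =i pred0.

Lemma good_prime B : exists N, [/\ prime N, (B < N)%N & abs (N%:R : K) = 1].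
Proof.
have [p1 hp1 pr1] := prime_above B.
have [p2 hp2 pr2] := prime_above p1.
have le1 : forall n, abs (n%:R : K) < 1 \/ abs (n%:R : K) = 1.
  move=> n; have := abs_natr Habs n; rewrite le_eqVlt => /orP[/eqP ->|->]; by [right|left].
case: (le1 p1) => [h1|h1]; last by exists p1.
case: (le1 p2) => [h2|h2]; last by exists p2; split => //; apply: ltn_trans hp2.
exfalso.
have cop : coprime p1 p2.
  rewrite prime_coprime // dvdn_prime2 //; apply/negP => /eqP e.
  by move: hp2; rewrite e ltnn.
have [u [v huv]] := Bezoutz p1 p2.
have e : (u * p1%:Z + v * p2%:Z)%:~R = (1 : K).
  by rewrite huv /gcdz /= (eqP cop).
rewrite intrD !intrM in e.
have : abs ((u%:~R * p1%:~R + v%:~R * p2%:~R) : K) < 1.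
  apply: abs_lt => //; rewrite absM //.
  - apply: le_lt_trans (_ : 1 * abs (p1%:R : K) < 1); last by rewrite mul1r.
    by apply: ler_wpM2r; [exact: abs_ge0|exact: abs_intr].
  - apply: le_lt_trans (_ : 1 * abs (p2%:R : K) < 1); last by rewrite mul1r.
    by apply: ler_wpM2r; [exact: abs_ge0|exact: abs_intr].
by rewrite e abs1 // ltxx.
Qed.

Lemma prim_root_ex N : (0 < N)%N -> exists z : K, N.-primitive_root z.
Proof.
pose p : {poly K} := 'X^N - 1; have [r Dp] := closed_field_poly_normal p.
move=> n_gt0; rewrite (monicP _) ?monicXnsubC // scale1r in Dp.
have rn1: all N.-unity_root r by apply/allP=> z; rewrite -root_prod_XsubC -Dp.
have sz_r: (N < (size r).+1)%N.
  by rewrite -(size_prod_XsubC r id) -Dp size_XnsubC.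
have [|z] := hasP (cyclic.has_prim_root n_gt0 rn1 _ sz_r); last by exists z.
rewrite -separable_prod_XsubC -Dp cyclotomic.separable_Xn_sub_1 //.
by rewrite (pcharf0P _).1 // -lt0n.
Qed.

Lemma sum_roots (z : K) N e : N.-primitive_root z ->
  \sum_(i < N) (z ^+ e) ^+ i = if (N %| e)%N then N%:R else 0.
Proof.
move=> pz; rewrite (prim_order_dvd pz); case: eqP => [->|ne].
  by rewrite (eq_bigr (fun _ => 1)) ?sumr_const ?card_ord // => i _; rewrite expr1n.
have : (z ^+ e - 1) * \sum_(i < N) (z ^+ e) ^+ i = 0.
  by rewrite -subrX1 -exprM mulnC exprM (prim_expr_order pz) expr1n subrr.
move/eqP; rewrite mulf_eq0 subr_eq0 => /orP[/eqP h|/eqP //]; by exfalso.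
Qed.

Lemma abs_prim (z : K) N : N.-primitive_root z -> abs z = 1.
Proof.
move=> pz; have N0 := prim_order_gt0 pz.
have : abs z ^+ N = 1 by rewrite -absX // (prim_expr_order pz) abs1.
by move/eqP; rewrite pexpr_eq1 // ?abs_ge0 // => /eqP.
Qed.

Lemma dvd_shift N k j : (k < N)%N -> (j < N)%N -> (N %| N - k + j)%N = (j == k).
Proof.
move=> hk hj; case: (ltngtP j k) => h.
- apply/negP => /dvdn_leq.
  have -> : (0 < N - k + j)%N by rewrite addn_gt0 subn_gt0 hk.
  move=> /(_ isT) h2.
  have : (N - k + j < N - k + k)%N by rewrite ltn_add2l.
  by rewrite (subnK (ltnW hk)) ltnNge h2.
- have e : (N - k + j = (j - k) + N)%N.
    by rewrite addnC -[j in LHS](subnK (ltnW h)) -addnA (subnKC (ltnW hk)).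
  rewrite e dvdn_addl //; apply/negP => /dvdn_leq.
  rewrite subn_gt0 h => /(_ isT) h2.
  have h3 : (j - k <= j)%N by exact: leq_subr.
  by have := leq_ltn_trans (leq_trans h2 h3) hj; rewrite ltnn.
- by rewrite h (subnK (ltnW hk)) dvdnn.
Qed.

Lemma GN (P : {poly K}) v lam k : lam != 0 ->
  exists y, abs (y - v) <= abs lam /\
    abs (P \Po (lam *: 'X + v%:P))`_k <= abs P.[y].
Proof.
move=> lam0; set H := P \Po _.
have [hk|hk] := leqP (size H) k.
  exists v; rewrite subrr abs0 // abs_ge0 //; split => //.
  by rewrite nth_default // abs0 // abs_ge0.
have [N [pN hN aN]] := good_prime (size H).
have N0 : (0 < N)%N by exact: prime_gt0.
have [z pz] := prim_root_ex N0.
have az := abs_prim pz.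
have key : N%:R * H`_k = \sum_(i < N) (z ^+ (N - k)) ^+ i * H.[z ^+ i].
  have e1 : forall i : 'I_N, (z ^+ (N - k)) ^+ i * H.[z ^+ i] =
      \sum_(j < size H) H`_j * (z ^+ (N - k + j)) ^+ i.
    move=> i; rewrite horner_coef mulr_sumr; apply: eq_bigr => j _.
    rewrite mulrCA; congr (_ * _).
    by rewrite -!exprM -exprD mulnDl (mulnC j i).
  rewrite (eq_bigr _ (fun i _ => e1 i)) exchange_big /=.
  rewrite (eq_bigr (fun j : 'I_(size H) => H`_j * (if (j == Ordinal hk) then N%:R else 0))); last first.
    move=> j _; rewrite -mulr_sumr sum_roots // dvd_shift //; last exact: ltn_trans (ltn_ord j) hN.
    exact: ltn_trans hk hN.
  rewrite (bigD1 (Ordinal hk)) //= eqxx big1 ?addr0; first by rewrite mulrC.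
  by move=> j /negPf ->; rewrite mulr0.
have : exists i : 'I_N, abs H`_k <= abs H.[z ^+ i].
  apply/not_existsP => hall.
  have : abs (N%:R * H`_k) < abs H`_k.
    rewrite key; apply: abs_sum_lt => //.
      rewrite lt_def abs_ge0 // andbT; apply/eqP => h0.
      have := hall (Ordinal N0); rewrite h0; apply; exact: abs_ge0.
    move=> i _; rewrite absM // !absX // az !expr1n mul1r ltNge; apply/negP; exact: hall.
  by rewrite absM // aN mul1r ltxx.
case=> i hi; exists (lam * z ^+ i + v); split.
  by rewrite addrK absM // absX // az expr1n mulr1.
by move: hi; rewrite /H horner_comp hornerD hornerZ hornerX hornerC.
Qed.

End Fourier.

Section Gauss.
Variables (R : realType) (K : closedFieldType) (abs : K -> R).
Hypothesis Habs : nonarch_abs abs.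

Definition W (P : {poly K}) (m : nat) (g : R) :=
  [/\ 0 < g, forall k, abs P`_k <= g, abs P`_m = g & forall k, (m < k)%N -> abs P`_k < g].

Lemma W_mul P Q m1 m2 g1 g2 : W P m1 g1 -> W Q m2 g2 -> W (P * Q) (m1 + m2) (g1 * g2).
Proof.
case=> g1p hP1 hP2 hP3 [g2p hQ1 hQ2 hQ3].
have gp : 0 < g1 * g2 by apply: mulr_gt0.
have tle : forall i j, abs (P`_j * Q`_(i - j)) <= g1 * g2.
  move=> i j; rewrite absM //; apply: ler_pM => //; exact: abs_ge0.
have tlt : forall i j, (m1 < j)%N \/ (m2 < i - j)%N -> abs (P`_j * Q`_(i - j)) < g1 * g2.
  move=> i j [h|h]; rewrite absM //.
  - apply: le_lt_trans (_ : abs P`_j * g2 < _).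
      by apply: ler_wpM2l; [exact: abs_ge0|].
    by rewrite ltr_pM2r //; apply: hP3.
  - apply: le_lt_trans (_ : g1 * abs Q`_(i - j) < _).
      by apply: ler_wpM2r; [exact: abs_ge0|].
    by rewrite ltr_pM2l //; apply: hQ3.
split => //.
- move=> k; rewrite coefM; apply: abs_sum_le => //; first exact: ltW.
- rewrite coefM.
  have hm : (m1 < (m1 + m2).+1)%N by rewrite ltnS leq_addr.
  rewrite (bigD1 (Ordinal hm)) //= addKn.
  rewrite (abs_strict Habs); first by rewrite absM // hP2 hQ2.
  rewrite absM // hP2 hQ2; apply: abs_sum_lt => // j hj.
  apply: tlt; case: (ltngtP j m1) => h.
  + by right; lia.
  + by left.
  + by exfalso; move: hj; apply/negP; rewrite negbK; apply/eqP; apply: val_inj.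
- move=> k hk; rewrite coefM; apply: abs_sum_lt => // j _.
  apply: tlt; case: (ltnP m1 j) => h; first by left.
  right; have := ltn_ord j; lia.
Qed.

Lemma W_C c : c != 0 -> W c%:P 0 (abs c).
Proof.
move=> c0; have cp : 0 < abs c.
  rewrite lt_def abs_ge0 // andbT; apply/eqP => /(abs_eq0 Habs) /eqP; by rewrite (negPf c0).
split => //.
- by move=> [|k]; rewrite coefC //= abs0 // ltW.
- by rewrite coefC.
- by move=> [|k] // _; rewrite coefC /= abs0.
Qed.

Variables (lam v : K).
Hypothesis lam0 : lam != 0.
Let q := lam *: 'X + v%:P.
Let rho := abs lam.
Definition inr (z : K) := abs (z - v) <= rho.
Definition wt (z : K) := if abs (z - v) <= rho then rho else abs (z - v).

Lemma rho_pos : 0 < rho.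
Proof. rewrite lt_def abs_ge0 // andbT; apply/eqP => /(abs_eq0 Habs) /eqP; by rewrite (negPf lam0). Qed.

Lemma W_fac z : W (q - z%:P) (if abs (z - v) <= rho then 1%N else 0%N) (wt z).
Proof.
have rp := rho_pos.
have ce : forall k, (q - z%:P)`_k = if k == 0%N then v - z else if k == 1%N then lam else 0.
  move=> k; rewrite /q coefB coefD coefZ coefX !coefC.
  by case: k => [|[|k]] /=; rewrite ?mulr0n ?mulr1n; ring.
have avz : abs (v - z) = abs (z - v) by apply: absB.
rewrite /wt; case: ifP => h; split => //.
- by move=> k; rewrite ce; case: ifP => _; [rewrite avz|case: ifP => _; rewrite ?abs0 // ltW].
- by rewrite ce.
- by move=> k hk; rewrite ce; case: k hk => [|[|k]] //= _; rewrite abs0.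
- by apply: lt_trans rp _; rewrite ltNge h.
- move=> k; rewrite ce; case: ifP => _; first by rewrite avz.
  have : rho < abs (z - v) by rewrite ltNge h.
  by case: ifP => _ hh; [apply: ltW|rewrite abs0 //; apply: ltW; apply: lt_trans hh].
- by rewrite ce /= avz.
- move=> k hk; rewrite ce; case: k hk => [|[|k]] //= _.
    by rewrite ltNge h.
  by rewrite abs0 //; apply: lt_trans rp _; rewrite ltNge h.
Qed.

Lemma W_prod (rs : seq K) :
  W (\prod_(z <- rs) (q - z%:P)) (count (fun z => abs (z - v) <= rho) rs) (\prod_(z <- rs) wt z).
Proof.
elim: rs => [|z rs IH].
  by rewrite !big_nil /=; have := W_C (oner_neq0 K); rewrite abs1.
rewrite !big_cons /=; have := W_mul (W_fac z) IH.
by case: ifP.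
Qed.

End Gauss.

Section Deriv.
Variables (R : realType) (K : closedFieldType) (abs : K -> R).
Hypothesis Habs : nonarch_abs abs.
Hypothesis Hchar : [pchar K] =i pred0.
Variable f : {poly K}.
Hypothesis Hdeg : (2 < size f)%N.

Lemma rootseq_eq (p : {poly K}) : p = lead_coef p *: \prod_(z <- rootseq p) ('X - z%:P).
Proof. exact: (svalP (closed_field_poly_normal p)). Qed.

Lemma deriv_big u v : u != v -> exists y m, [/\ abs (y - v) <= abs (u - v),
   m = local_deg abs f v (abs (u - v)), (0 < m)%N &
   abs (f.[u] - f.[v]) * abs (m%:R : K) / abs (u - v) <= abs f^`().[y]].
Proof.
move=> uv; set lam := u - v.
have lam0 : lam != 0 by rewrite subr_eq0.
set g := f - f.[v]%:P.
have sg : size g = size f.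
  rewrite /g size_polyDl // size_polyN; apply: leq_ltn_trans (size_polyC_leq1 _) _.
  by apply: ltn_trans Hdeg.
have g0 : g != 0 by rewrite -size_poly_eq0 sg -lt0n; apply: ltn_trans Hdeg.
set a := lead_coef g.
have a0 : a != 0 by rewrite lead_coef_eq0.
set rs := rootseq g.
have hg := rootseq_eq g.
set q := lam *: 'X + v%:P.
set G := g \Po q.
have hG : G = a%:P * \prod_(z <- rs) (q - z%:P).
  rewrite /G {1}hg comp_polyZ -mul_polyC; congr (_ * _).
  rewrite /rs; elim: (rootseq g) => [|z s IH]; first by rewrite !big_nil comp_polyC.
  by rewrite !big_cons comp_polyM IH comp_polyB comp_polyX comp_polyC.
set m := count (fun z => abs (z - v) <= abs lam) rs.
have hW : W abs G m (abs a * \prod_(z <- rs) wt abs lam v z).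
  by rewrite hG -[m]add0n; apply: W_mul => //; [apply: W_C|apply: W_prod].
case: hW => gp hall hm _.
set gam := abs a * _ in gp hall hm.
have vin : v \in rs.
  have : root g v by rewrite /root /g hornerD hornerN hornerC subrr.
  rewrite {1}hg /root hornerZ mulf_eq0 (negPf a0) /= -/(root _ v) root_prod_XsubC.
  by [].
have m0 : (0 < m)%N.
  rewrite /m -has_count; apply/hasP; exists v => //.
  by rewrite subrr abs0 // abs_ge0.
have G1 : G.[1] = f.[u] - f.[v].
  have q1 : q.[1] = u by rewrite /q hornerD hornerZ hornerX hornerC mulr1 /lam subrK.
  by rewrite /G horner_comp q1 /g hornerD hornerN hornerC.
have G1b : abs G.[1] <= gam.
  rewrite horner_coef; apply: abs_sum_le => //; first exact: ltW.
  by move=> i _; rewrite expr1n mulr1.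
have dq : q^`() = lam%:P.
  by rewrite /q derivD derivZ derivX derivC addr0 alg_polyC.
have dg : g^`() = f^`() by rewrite /g derivB derivC subr0.
have hc : (f^`() \Po q)`_m.-1 * lam = G`_m *+ m.
  have := coef_deriv G m.-1; rewrite prednK //.
  by rewrite {1}/G deriv_comp dq dg coefMC.
have [y [hy1 hy2]] := GN Habs Hchar f^`() v m.-1 lam0.
exists y, m; split => //.
have lp : 0 < abs lam.
  rewrite lt_def abs_ge0 // andbT; apply/eqP => /(abs_eq0 Habs) /eqP; by rewrite (negPf lam0).
apply: le_trans hy2.
have -> : (f^`() \Po q)`_m.-1 = G`_m *+ m / lam by rewrite -hc mulfK.
rewrite absM // abs_inv // -[G`_m *+ m]mulr_natr absM // hm.
apply: ler_wpM2r; first by rewrite invr_ge0 abs_ge0.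
apply: ler_wpM2r; first exact: abs_ge0.
by rewrite -G1.
Qed.

End Deriv.

Section XiBound.
Variables (R : realType) (K : closedFieldType) (abs : K -> R).
Hypothesis Habs : nonarch_abs abs.
Hypothesis Hchar : [pchar K] =i pred0.
Variable f : {poly K}.
Hypothesis Hdeg : (2 < size f)%N.

Lemma pbase_gt1 : 1 < pbase abs.
Proof.
rewrite /pbase; case: ifP => h; last by rewrite expR_gt1.
have [ex|nex] := pselect (exists q, [set q | prime q /\ abs q%:R < 1] q).
  have := xgetPex 0%N ex; rewrite -/(res_char abs) => -[pq _].
  by rewrite ltr1n prime_gt1.
by move: h; rewrite /res_char xgetPN // => x hx; apply: nex; exists x.
Qed.

Lemma size_rootseq c : size (rootseq (f - c%:P)) = (size f).-1.
Proof.
have sg : size (f - c%:P) = size f.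
  rewrite size_polyDl // size_polyN; apply: leq_ltn_trans (size_polyC_leq1 _) _.
  by apply: ltn_trans Hdeg.
have g0 : f - c%:P != 0 by rewrite -size_poly_eq0 sg -lt0n; apply: ltn_trans Hdeg.
move: sg; rewrite {1}(rootseq_eq (f - c%:P)) size_scale ?lead_coef_eq0 //.
by rewrite size_prod_XsubC => <-.
Qed.

Lemma local_degs_le m : local_degs abs f m -> (m <= (size f).-1)%N.
Proof.
case=> [->//|[a [r [_ ->]]]]; rewrite /local_deg.
by apply: leq_trans (count_size _ _) _; rewrite size_rootseq.
Qed.

Lemma kappa_le m : local_degs abs f m -> kappa abs f <= logp abs (abs (m%:R : K)).
Proof.
move=> hm; apply: ge_inf; last by exists m.
set d := (size f).-1.
exists (- \sum_(i < d.+1) `|logp abs (abs (i%:R : K))|) => x [k hk <-].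
have hk' : (k < d.+1)%N by rewrite ltnS local_degs_le.
apply: le_trans (_ : - `|logp abs (abs (k%:R : K))| <= _); last first.
  by rewrite lerNl -normrN; exact: ler_norm.
rewrite lerN2.
exact: (@single_le_sum _ _ (fun i : 'I_d.+1 => `|logp abs (abs (i%:R : K))|) (Ordinal hk')).
Qed.

Lemma powk_ge m : local_degs abs f m -> (0 < m)%N ->
  (abs (m%:R : K))^-1 <= powR (pbase abs) (- kappa abs f).
Proof.
move=> hm m0.
have p1 := pbase_gt1.
have lp : 0 < ln (pbase abs) by apply: ln_gt0.
have am : 0 < abs (m%:R : K) by apply: abs_natr_pos.
apply: le_trans (_ : powR (pbase abs) (- logp abs (abs (m%:R : K))) <= _); last first.
  by apply: ler_powR; [exact: ltW|rewrite lerN2; exact: kappa_le].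
rewrite /powR ifN; last by apply/eqP => h; move: p1; rewrite h ltr10.
rewrite /logp mulNr divfK; last by rewrite gt_eqF.
by rewrite expRN lnK // posrE.
Qed.

Lemma Rf_le c : filled abs f c -> Rf abs f <= T0 abs f.
Proof.
move=> hc; apply: ge_sup; first by exists 0; exists c => //; exists c => //; rewrite subrr abs0.
move=> z [x hx [y hy <-]].
apply: abs_le => //; first exact: filled_le.
by rewrite absN //; apply: filled_le.
Qed.

Lemma xi_le c y : filled abs f c -> xi_disk abs f y -> abs y <= T0 abs f.
Proof.
move=> hc [x hx hyx]; apply: le_trans (abs_shift Habs x y) _.
rewrite ge_max filled_le //=; apply: le_trans hyx _; exact: Rf_le hc.
Qed.

Lemma norm_ge c y : filled abs f c -> xi_disk abs f y -> abs f^`().[y] <= norm_xi abs f f^`().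
Proof.
move=> hc hy; apply: ub_le_sup; last by exists y.
exists (Sb abs f^`() (T0 abs f)) => z [w hw <-].
apply: horner_bound => //; exact: xi_le hc hw.
Qed.

Lemma Xi_gt1 c : julia abs f c -> 0 < Rf abs f -> 1 < Xi abs f.
Proof.
move=> [hc hj] Rp.
set Rr := Rf abs f.
have [y0 [hy0 esc]] := hj _ Rp.
have xi0 : xi_disk abs f y0 by exists c => //; apply: ltW.
have nxi : exists n, ~ xi_disk abs f (orb f n y0).
  have [N hN] := esc (T0 abs f); exists N => hx.
  by have := hN N (leqnn N); rewrite ltNge (xi_le hc hx).
have [k [hk1 hk2]] : exists k, xi_disk abs f (orb f k y0) /\ ~ xi_disk abs f (orb f k.+1 y0).
  apply: contrapT => hne; case: nxi => n; apply; elim: n => // n IH.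
  apply: contrapT => h; apply: hne; by exists n.
set u := orb f k y0 in hk1 hk2.
case: hk1 => v hv huv.
have hfv := filled_f hv.
have big : Rr < abs (f.[u] - f.[v]).
  rewrite ltNge; apply/negP => h; apply: hk2; rewrite orbS; by exists f.[v].
have uv : u != v.
  apply/eqP => e; move: big; rewrite e subrr abs0 // => h.
  by move: Rp; rewrite ltNge (ltW h).
have [y [m [hy hm m0 hder]]] := deriv_big Habs Hchar Hdeg uv.
have hyxi : xi_disk abs f y by exists v => //; apply: le_trans hy huv.
have hmld : local_degs abs f m by right; exists v, (abs (u - v)); split => //; exact: abs_ge0.
have am : 0 < abs (m%:R : K) by apply: abs_natr_pos.
have auv : 0 < abs (u - v).
  rewrite lt_def abs_ge0 // andbT; apply/eqP => /(abs_eq0 Habs) /eqP; by rewrite subr_eq0 (negPf uv).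
have hgt : abs (m%:R : K) < abs f^`().[y].
  apply: lt_le_trans hder.
  rewrite mulrAC ltr_pMl // ltr_pdivlMr // mul1r.
  by apply: le_lt_trans big.
rewrite /Xi.
apply: lt_le_trans (_ : (abs (m%:R : K))^-1 * abs f^`().[y] <= _).
  by rewrite mulrC ltr_pdivlMr // mul1r.
apply: ler_pM.
- by rewrite invr_ge0 ltW.
- exact: abs_ge0.
- exact: (powk_ge hmld m0).
- exact: (norm_ge hc hyxi).
Qed.

End XiBound.

Lemma pow_big (R : realType) (X : R) : 1 < X -> forall B, exists q : nat, B <= X ^+ q.
Proof.
move=> X1 B.
have bern : forall q : nat, 1 + q%:R * (X - 1) <= X ^+ q.
  elim=> [|q IH]; first by rewrite mul0r addr0 expr0.
  rewrite exprS; apply: le_trans (_ : X * (1 + q%:R * (X - 1)) <= _); last first.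
    by apply: ler_wpM2l => //; apply: ltW; apply: lt_trans X1; exact: ltr01.
  have q0 : 0 <= (q%:R : R) by exact: ler0n.
  rewrite -addn1 natrD -subr_ge0.
  have -> : X * (1 + q%:R * (X - 1)) - (1 + (q%:R + 1%:R) * (X - 1)) = q%:R * ((X - 1) * (X - 1)) by ring.
  by apply: mulr_ge0 => //; rewrite -expr2; exact: sqr_ge0.
have h0 : 0 <= `|B| / (X - 1) by apply: divr_ge0 => //; rewrite subr_ge0 ltW.
have hb := archi_boundP h0.
exists (Num.Def.archi_bound (`|B| / (X - 1))).
apply: le_trans (bern _); apply: le_trans (ler_norm B) _.
move: hb; rewrite ltr_pdivrMr ?subr_gt0 // => hb.
apply: le_trans (ltW hb) _; rewrite lerDr; exact: ler01.
Qed.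

Lemma sumn_le (l : seq nat) B : all (fun x => x <= B)%N l -> (sumn l <= size l * B)%N.
Proof.
elim: l => [|x l IH] //= /andP[hx hl].
by rewrite mulSn leq_add // IH.
Qed.

Lemma div_close (a b n : nat) : (0 < n)%N -> (a %/ n = b %/ n)%N -> (b <= a)%N -> (a - b < n)%N.
Proof.
move=> n0 e hba.
have ea := divn_eq a n; have eb := divn_eq b n.
have ra := ltn_pmod a n0.
rewrite e in ea.
set k := (b %/ n * n)%N in ea eb.
lia.
Qed.

Section Main.
Variables (R : realType) (K : closedFieldType) (abs : K -> R).
Hypothesis Habs : nonarch_abs abs.
Hypothesis Hchar : [pchar K] =i pred0.
Variable f : {poly K}.
Hypothesis Hdeg : (2 < size f)%N.

Let T := T0 abs f.
Definition LL := 1 + Sb abs f T + \sum_(c <- rootseq f^`()) Sb abs (Q2 f c) T.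

Lemma T_ge1 : 1 <= T. Proof. exact: T0_ge1. Qed.
Lemma T_ge0 : 0 <= T. Proof. by apply: le_trans T_ge1. Qed.

Lemma deriv_neq0 : f^`() != 0.
Proof.
have sf : size f = (size f).-1.+1 by rewrite prednK //; apply: ltn_trans Hdeg.
set d := (size f).-1 in sf.
apply/eqP => h.
have := congr1 (fun p : {poly K} => p`_d.-1) h; rewrite /= coef_deriv coef0.
have d0 : (0 < d)%N by rewrite -ltnS -sf; apply: ltn_trans Hdeg.
rewrite prednK // -mulr_natr => /eqP; rewrite mulf_eq0 (pcharf0P _).1 //.
have -> : f`_d = lead_coef f by rewrite lead_coefE.
rewrite lead_coef_eq0 => /orP[/eqP f0|/eqP d00]; last by move: d0; rewrite d00.
by move: Hdeg; rewrite f0 size_poly0.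
Qed.

Lemma crit_in c : root f^`() c -> c \in rootseq f^`().
Proof.
move=> hr; move: hr; rewrite {1}(rootseq_eq f^`()) /root hornerZ mulf_eq0.
rewrite lead_coef_eq0 (negPf deriv_neq0) /= -/(root _ c) root_prod_XsubC //.
Qed.

Lemma LL_ge1 : 1 <= LL.
Proof.
have h1 : 0 <= Sb abs f T by exact: Sb_ge0 T_ge0.
have h2 : 0 <= \sum_(c <- rootseq f^`()) Sb abs (Q2 f c) T.
  by apply: sumr_ge0 => i _; exact: Sb_ge0 T_ge0.
rewrite /LL; lra.
Qed.

Lemma quadL c u : root f^`() c -> abs u <= T -> abs (f.[u] - f.[c]) <= LL * abs (u - c) ^+ 2.
Proof.
move=> hc hu; apply: le_trans (quad_bound Habs hc hu) _.
rewrite mulrC; apply: ler_wpM2r; first by apply: exprn_ge0; exact: abs_ge0.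
have h3 : Sb abs (Q2 f c) T <= \sum_(c <- rootseq f^`()) Sb abs (Q2 f c) T.
  apply: (@seq_le_sum _ _ _ (fun c => Sb abs (Q2 f c) T)); first exact: crit_in.
  by move=> j; exact: Sb_ge0 T_ge0.
have h1 : 0 <= Sb abs f T by exact: Sb_ge0 T_ge0.
rewrite /LL; lra.
Qed.

Lemma lipL a b : abs a <= T -> abs b <= T -> abs (f.[a] - f.[b]) <= LL * abs (a - b).
Proof.
move=> ha hb; apply: le_trans (lipschitz Habs f ha hb T_ge1) _.
rewrite mulrC; apply: ler_wpM2r; first exact: abs_ge0.
have h2 : 0 <= \sum_(c <- rootseq f^`()) Sb abs (Q2 f c) T.
  by apply: sumr_ge0 => i _; exact: Sb_ge0 T_ge0.
rewrite /LL; lra.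
Qed.

Lemma dyn c x m eps : root f^`() c -> julia abs f c -> (0 < m)%N -> 0 < eps -> eps <= T ->
  LL ^+ m * eps <= 1 -> abs (x - c) < eps -> abs (orb f m x - c) < eps -> False.
Proof.
move=> hcr [hc hj] m0 ep eT hL hx hmx.
have cT : abs c <= T by exact: filled_le.
have L1 := LL_ge1.
have L0 : 0 <= LL by apply: le_trans L1; exact: ler01.
have uT : forall u, abs (u - c) < eps -> abs u <= T.
  move=> u hu; apply: le_trans (abs_shift Habs c u) _.
  by rewrite ge_max cT /=; apply: le_trans eT; apply: ltW.
have key : forall u, abs (u - c) < eps -> forall i, (0 < i)%N -> (i <= m)%N ->
    abs (orb f i u - orb f i c) <= LL ^+ i * abs (u - c) ^+ 2.
  move=> u hu; elim=> // i IH _ hi.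
  case: i IH hi => [|i] IH hi.
    by rewrite expr1; apply: quadL => //; exact: uT.
  have IH' := IH isT (ltnW hi).
  set di := abs (orb f i.+1 u - orb f i.+1 c) in IH'.
  have a0 : 0 <= abs (u - c) by exact: abs_ge0.
  have bd : di <= abs (u - c).
    apply: le_trans IH' _.
    have h1 : LL ^+ i.+1 <= LL ^+ m by apply: ler_weXn2l => //; apply: ltnW.
    have h2 : abs (u - c) ^+ 2 <= abs (u - c) * eps by rewrite expr2; apply: ler_wpM2l => //; exact: ltW.
    apply: le_trans (_ : LL ^+ m * (abs (u - c) * eps) <= _).
      apply: ler_pM => //; [exact: exprn_ge0|exact: exprn_ge0].
    rewrite mulrCA -[X in _ <= X]mulr1; apply: ler_wpM2l => //.
  have hoc : abs (orb f i.+1 c) <= T by apply: (filled_le Habs Hdeg); exact: filled_orb.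
  have hou : abs (orb f i.+1 u) <= T.
    apply: le_trans (abs_shift Habs (orb f i.+1 c) _) _.
    rewrite ge_max hoc /=; apply: le_trans eT; apply: ltW; exact: le_lt_trans bd hu.
  rewrite orbS [orb f i.+2 c]orbS.
  apply: le_trans (lipL hou hoc) _.
  rewrite exprS -mulrA; apply: ler_wpM2l => //.
have key2 : forall u, abs (u - c) < eps -> abs (orb f m u - orb f m c) < eps.
  move=> u hu; have h := key u hu m m0 (leqnn m).
  have a0 : 0 <= abs (u - c) by exact: abs_ge0.
  apply: (le_lt_trans _ hu); apply: le_trans h _.
  rewrite expr2 mulrA [LL ^+ m * _]mulrC -mulrA.
  rewrite -[X in _ <= X]mulr1; apply: ler_wpM2l => //.
  apply: le_trans hL; apply: ler_wpM2l; first exact: exprn_ge0.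
  exact: ltW.
have hcm : abs (orb f m c - c) < eps.
  have -> : orb f m c - c = (orb f m c - orb f m x) + (orb f m x - c) by rewrite addrA subrK.
  by apply: abs_lt => //; rewrite absB //; apply: key2.
have inv : forall u, abs (u - c) < eps -> abs (orb f m u - c) < eps.
  move=> u hu.
  have -> : orb f m u - c = (orb f m u - orb f m c) + (orb f m c - c) by rewrite addrA subrK.
  by apply: abs_lt => //; apply: key2.
have [y [hy ey]] := hj eps ep.
exact: (inv_disk m0 inv uT hy ey).
Qed.

End Main.

Unset Implicit Arguments.
Set Strict Implicit.

Theorem lemma2p8 (R : realType) (K : closedFieldType) (abs : K -> R)
    (Hchar : [pchar K] =i pred0)
    (Habs : nonarch_abs abs) (Hnt : nontrivial_abs abs) (Hcomp : complete_abs abs)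
    (f : {poly K}) (Hdeg : (2 < size f)%N)
    (HCJ : exists c, crit f c /\ julia abs f c) :
  exists (M N : nat), (1 <= M)%N /\ (1 <= N)%N /\
    forall c, crit f c -> julia abs f c ->
    forall n, (N <= n)%N ->
      exists s : seq K, (size s <= M)%N /\
        forall v, critvals f n v -> Ds abs f n%:R c v -> v \in s.
Proof.
have [hR|hR] := lerP (Rf abs f) 0.
  exists 1%N, 1%N; split => //; split => //.
  move=> c _ _ n _; exists [::]; split => // v _ hv; exfalso.
  move: hv; rewrite /Ds /odisk /= => hv.
  have : Rf abs f * powR (Xi abs f) (- n%:R) <= 0 by apply: mulr_le0_ge0 => //; exact: powR_ge0.
  by move=> h; have := lt_le_trans hv h; rewrite ltNge abs_ge0.
case: HCJ => c0 [_ hj0].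
have X1 := Xi_gt1 Habs Hchar Hdeg hj0 hR.
set X := Xi abs f in X1 *.
have [q hq] := pow_big X1 (LL abs f).
have [t ht] := pow_big X1 (T0 abs f).
set rs := rootseq f^`().
exists (size rs * (q.*2).+1).+1, (t.*2).+1; split => //; split => //.
move=> c hcr hjc n hn.
have n0 : (0 < n)%N by apply: leq_trans hn.
have Xp : 0 < X by apply: lt_trans X1; exact: ltr01.
set eps := Rf abs f * powR X (- n%:R).
have epsE : eps = Rf abs f / X ^+ n by rewrite /eps powRN powR_mulrn // ltW.
have Xn1 : 1 <= X ^+ n by apply: exprn_ege1; exact: ltW.
have Xnp : 0 < X ^+ n by apply: exprn_gt0.
have ep : 0 < eps by rewrite epsE; apply: divr_gt0.
have RT : Rf abs f <= T0 abs f := Rf_le Habs Hdeg (proj1 hjc).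
have eT : eps <= T0 abs f.
  apply: le_trans RT; rewrite epsE ler_pdivrMr //; apply: ler_peMr => //; exact: ltW.
have L0 : 0 <= LL abs f by apply: le_trans (_ : 1 <= _); [exact: ler01|exact: LL_ge1].
pose hits c' := [seq j <- iota 1 n | `[< abs (orb f j c' - c) < eps >]].
have hsize : forall c', (size (hits c') <= (q.*2).+1)%N.
  move=> c'.
  pose g j := (j * q.*2 %/ n)%N.
  have close : forall j1 j2, j1 \in hits c' -> j2 \in hits c' -> (j1 < j2)%N -> g j1 != g j2.
    move=> j1 j2; rewrite !mem_filter !mem_iota.
    move=> /andP[/asboolP h1 /andP[a1 b1]] /andP[/asboolP h2 /andP[a2 b2]] lt12.
    set m := (j2 - j1)%N.
    have m0 : (0 < m)%N by rewrite subn_gt0.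
    have horb : orb f m (orb f j1 c') = orb f j2 c' by rewrite -orbD subnK // ltnW.
    have big : (n < q * m + t)%N.
      rewrite ltnNge; apply/negP => hle.
      apply: (dyn Habs Hchar Hdeg hcr hjc m0 ep eT _ h1); last by rewrite horb.
      rewrite epsE mulrA ler_pdivrMr // mul1r.
      apply: le_trans (_ : X ^+ (q * m) * X ^+ t <= _).
        apply: ler_pM => //; first exact: exprn_ge0.
        - exact: ltW.
        - by rewrite exprM; apply: powle.
        - exact: le_trans RT ht.
      by rewrite -exprD; apply: ler_weXn2l => //; exact: ltW.
    apply/negP => /eqP e.
    have hb : (j1 * q.*2 <= j2 * q.*2)%N by rewrite leq_mul2r ltnW ?orbT.
    have := div_close n0 (esym e) hb.
    rewrite -mulnBl -/m => h.
    have e2 : (m * q.*2 = (q * m).*2)%N by rewrite -!mul2n mulnCA (mulnC m q).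
    rewrite e2 in h.
    move: h big hn; set A := (q * m)%N => h big hn.
    have h3 : (A.*2 < A + t)%N by apply: ltn_trans h big.
    have h4 : (A < t)%N by rewrite -addnn ltn_add2l in h3.
    have : (n < t.*2)%N by apply: (ltn_trans big); rewrite -addnn ltn_add2r.
    by rewrite ltnNge ltnW.
  have hu : uniq (hits c') by apply: filter_uniq; exact: iota_uniq.
  have hinj : {in hits c' &, injective g}.
    move=> j1 j2 h1 h2 e; case: (ltngtP j1 j2) => // h.
      by move: (close _ _ h1 h2 h); rewrite e eqxx.
    by move: (close _ _ h2 h1 h); rewrite e eqxx.
  rewrite -(size_map g) -[(q.*2).+1](size_iota 0).
  apply: (uniq_leq_size (s2 := iota 0 (q.*2).+1)); first by rewrite map_inj_in_uniq.
  move=> x /mapP[j hj ->]; rewrite mem_iota add0n ltnS /g.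
  move: hj; rewrite mem_filter mem_iota => /andP[_ /andP[_ hjn]].
  have hjn' : (j <= n)%N by rewrite -ltnS -(addn1 n) addnC.
  apply: leq_trans (_ : (n * q.*2 %/ n <= _)%N); first by apply: leq_div2r; rewrite leq_mul2r hjn' orbT.
  by rewrite mulKn.
exists (flatten [seq [seq orb f j c' | j <- hits c'] | c' <- rs]); split.
  apply: leqW; rewrite size_flatten /shape -map_comp.
  apply: leq_trans (sumn_le _) _; last by rewrite size_map.
  by apply/allP => x /mapP[c' _ ->] /=; rewrite size_map.
move=> v hv hd.
have [c' [j [hr [/andP[hj1 hj2] ev]]]] := critvals_char hv.
apply/flatten_mapP; exists c'; first exact: (crit_in Hchar Hdeg).
rewrite ev; apply: map_f; rewrite mem_filter mem_iota hj1 /=.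
rewrite add1n ltnS hj2 andbT; apply/asboolP.
by move: hd; rewrite /Ds /odisk /= ev.
Qed.
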